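(* Take $R=\mathbb{F}_2$, $F=\hat{\mathbb{G}}_a$, $G=\hat{\mathbb{G}}_m$ in the tangent spectral sequence $H^*(\hat{\mathbb{G}}_a;\hat{\mathbb{G}}_a)(R)\Rightarrow H^*(\hat{\mathbb{G}}_a;\hat{\mathbb{G}}_m)(R)$, let $i\neq j$ and let $c$ be a coefficient. Then \[ d_{2^i+2^j}(c\,a_ia_j) = c^2\,(a_i^2a_{j+1}-a_{i+1}a_j^2). \]
   Context: $\hat{\mathbb{G}}_a$ is the formal group law $x+y$ and $\hat{\mathbb{G}}_m$ the formal group law $x+y+xy$ (equivalently $(1+x)(1+y)$). Lubin–Tate cochains $A^n(F;G)(R)$ are power series in $n$ variables with zero constant term with the alternating coboundary built from the group laws; $H^*(F;G)(R)$ is the cohomology. The tangent spectral sequence is the spectral sequence of the filtration of these cochains by leading total degree; its $E_1$-term is $H^*(\hat{\mathbb{G}}_a;\hat{\mathbb{G}}_a)(R)$, graded by the homogeneous degree of representing polynomials, and it converges to $H^*(\hat{\mathbb{G}}_a;\hat{\mathbb{G}}_m)(R)$; $d_r$ is the differential on the $E_r$-page. Over $\mathbb{F}_2$, $H^*(\hat{\mathbb{G}}_a;\hat{\mathbb{G}}_a)(\mathbb{F}_2)$ is the polynomial algebra on classes $a_i\in H^1$ represented by $x^{2^i}$; the product $a_ia_j\in H^2$ is represented by $x^{2^i}y^{2^j}$, and similarly for cubic monomials in three variables. *)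

(* Defs.v *)
From HB Require Import structures.
From mathcomp Require Import all_boot all_algebra.
From mathcomp Require Import mpoly.

Set Implicit Arguments.
Unset Strict Implicit.
Unset Printing Implicit Defensive.

Import GRing.Theory.
Local Open Scope ring_scope.

Section LubinTate.
Variable R : comNzRingType.

Definition PS (n : nat) := 'X_{1..n} -> R.

Definition trunc n (d : nat) (f : PS n) : {mpoly R[n]} :=
  \sum_(m : 'X_{1..n < d.+1}) f m *: 'X_[bmnm m].

Definition ps_of n (p : {mpoly R[n]}) : PS n := fun m => p@_m.
Definition ps_zero n : PS n := fun _ => 0.
Definition ps_add n (f g : PS n) : PS n := fun m => f m + g m.
(* product of power series: the degree-d coefficients only depend on the
   truncations to degree d *)
Definition ps_mul n (f g : PS n) : PS n :=
  fun m => (trunc (mdeg m) f * trunc (mdeg m) g)@_m.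

(* The formal group law G_m : x +_G y = x + y + xy, and its formal inverse
   [-_G] u = (1+u)^{-1} - 1 = sum_{k>=1} (-u)^k (for u with zero constant
   term; in degree d only k <= d contribute). *)
Definition gm_add n (f g : PS n) : PS n := ps_add (ps_add f g) (ps_mul f g).
Definition gm_opp n (f : PS n) : PS n :=
  fun m => (\sum_(1 <= k < (mdeg m).+1) (- trunc (mdeg m) f) ^+ k)@_m.
Definition gm_sub n (f g : PS n) : PS n := gm_add f (gm_opp g).

Definition ps_subst n k (lq : n.-tuple {mpoly R[k]}) (f : PS n) : PS k :=
  fun m => ((trunc (mdeg m) f) \mPo lq)@_m.

(* k-th face for F = G_a (0-indexed variables x_0..x_n):
   k = 0      : f(x_1, ..., x_n)
   1<=k<=n    : f(x_0, ..., x_{k-1} + x_k, ..., x_n)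
   k = n+1    : f(x_0, ..., x_{n-1}) *)
Definition face_var n (k : nat) (i : 'I_n) : {mpoly R[n.+1]} :=
  if (i.+1 < k)%N then 'X_(inord i)
  else if i.+1 == k then 'X_(inord i) + 'X_(inord i.+1)
  else 'X_(inord i.+1).

Definition face n (k : nat) : n.-tuple {mpoly R[n.+1]} :=
  [tuple face_var k i | i < n].

(* Lubin--Tate coboundary A^n(G_a;G_m) -> A^{n+1}(G_a;G_m):
   delta f = f o d_0  -_G  f o d_1  +_G  f o d_2 ... (alternating in G_m). *)
Definition delta n (f : PS n) : PS n.+1 :=
  foldl (fun acc k => if odd k then gm_sub acc (ps_subst (face n k) f)
                      else gm_add acc (ps_subst (face n k) f))
        (@ps_zero n.+1) (iota 0 n.+2).

Definition cochain n (f : PS n) : Prop := f 0%MM = 0.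

Definition inF n (p : nat) (f : PS n) : Prop :=
  forall m : 'X_{1..n}, (mdeg m < p)%N -> f m = 0.

(* Spectral sequence of the filtered complex:
   Z_r^p = { x in F^p A^n | delta x in F^{p+r} },
   E_r^p = Z_r^p / (Z_{r-1}^{p+1} + delta Z_{r-1}^{p-r+1}),
   d_r [x] = [delta x]. *)
Definition Zr n (r p : nat) (f : PS n) : Prop :=
  cochain f /\ inF p f /\ inF (p + r) (delta f).

(* equality of the classes of x, y (both in Z_r^p A^{n+1}) in E_r^p *)
Definition Eeq n (r p : nat) (x y : PS n.+1) : Prop :=
  exists (a : PS n.+1) (b : PS n),
    Zr r.-1 p.+1 a /\ Zr r.-1 (p.+1 - r) b /\
    forall m, gm_sub x y m = gm_add a (delta b) m.

Definition agree_upto n (d : nat) (f g : PS n) : Prop :=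
  forall m : 'X_{1..n}, (mdeg m <= d)%N -> f m = g m.

End LubinTate.

(* Main.v *)
Require Import Defs.
From HB Require Import structures.
From mathcomp Require Import all_boot all_algebra.
From mathcomp Require Import mpoly.
From mathcomp Require Import ring zify.
From Stdlib Require Import FunctionalExtensionality.
Set Implicit Arguments.
Unset Strict Implicit.
Import GRing.Theory.
Local Open Scope ring_scope.

Section Gen.
Variable R : comNzRingType.

Definition Pin n (N : nat) (P : {mpoly R[n]}) :=
  forall m : 'X_{1..n}, (mdeg m < N)%N -> P@_m = 0.

Lemma Pin_le n a b (P : {mpoly R[n]}) : (b <= a)%N -> Pin a P -> Pin b P.
Proof. move=> le h m hm; apply: h; exact: leq_trans hm le. Qed.

Lemma Pin0 n N : Pin N (0 : {mpoly R[n]}).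
Proof. by move=> m _; rewrite mcoeff0. Qed.

Lemma PinD n N (P Q : {mpoly R[n]}) : Pin N P -> Pin N Q -> Pin N (P + Q).
Proof. by move=> hP hQ m hm; rewrite mcoeffD hP // hQ // addr0. Qed.

Lemma PinN n N (P : {mpoly R[n]}) : Pin N P -> Pin N (- P).
Proof. by move=> hP m hm; rewrite mcoeffN hP // oppr0. Qed.

Lemma PinB n N (P Q : {mpoly R[n]}) : Pin N P -> Pin N Q -> Pin N (P - Q).
Proof. by move=> hP hQ; apply: PinD => //; apply: PinN. Qed.

Lemma PinZ n N c (P : {mpoly R[n]}) : Pin N P -> Pin N (c *: P).
Proof. by move=> hP m hm; rewrite mcoeffZ hP // mulr0. Qed.

Lemma PinM n a b (P Q : {mpoly R[n]}) : Pin a P -> Pin b Q -> Pin (a + b) (P * Q).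
Proof.
move=> hP hQ m hm; rewrite mcoeffM big1 // => k /eqP e.
have : (mdeg k.1 + mdeg k.2 < a + b)%N by rewrite -mdegD -e.
case: (ltnP (mdeg k.1) a) => h1; first by rewrite hP // mul0r.
case: (ltnP (mdeg k.2) b) => h2; first by rewrite hQ // mulr0.
by move=> h; have := leq_add h1 h2; rewrite leqNgt h.
Qed.

Lemma Pin_any n (P : {mpoly R[n]}) : Pin 0 P.
Proof. by []. Qed.

Lemma PinX n a k (P : {mpoly R[n]}) : Pin a P -> Pin (k * a) (P ^+ k).
Proof.
move=> hP; elim: k => [|k ih]; first by rewrite mul0n.
by rewrite exprS mulSn; apply: PinM.
Qed.

Lemma PinXU n (i : 'I_n) : Pin 1 ('X_i : {mpoly R[n]}).
Proof.
move=> m; rewrite ltnS leqn0 mdeg_eq0 => /eqP ->.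
by rewrite mcoeffX; case: eqP => // /(congr1 mdeg); rewrite mdeg1 mdeg0.
Qed.

Lemma Pin_sum n N (I : Type) (r : seq I) (F : I -> {mpoly R[n]}) :
  (forall i, Pin N (F i)) -> Pin N (\sum_(i <- r) F i).
Proof.
move=> h; elim: r => [|x r ih]; first by rewrite big_nil; apply: Pin0.
by rewrite big_cons; apply: PinD.
Qed.

Lemma Pin_comp n k N (P : {mpoly R[n]}) (lq : n.-tuple {mpoly R[k]}) :
  (forall i, Pin 1 (tnth lq i)) -> Pin N P -> Pin N (P \mPo lq).
Proof.
move=> hl hP; rewrite comp_mpolyE; apply: Pin_sum => m.
case: (ltnP (mdeg m) N) => h.
  by rewrite hP // scale0r; apply: Pin0.
apply: PinZ; apply: (@Pin_le _ (mdeg m)) => //.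
rewrite mdegE.
elim/big_ind2: _ => //.
- move=> x1 a1 x2 a2 h1 h2; rewrite addnC mulrC. exact: PinM.
- move=> i _; rewrite -[X in Pin X _]muln1; exact: PinX.
Qed.


Definition agr n N (f g : PS R n) := forall m : 'X_{1..n}, (mdeg m < N)%N -> f m = g m.

Lemma agr_le n a b (f g : PS R n) : (b <= a)%N -> agr a f g -> agr b f g.
Proof. move=> le h m hm; apply: h; exact: leq_trans hm le. Qed.

Lemma agr_sym n N (f g : PS R n) : agr N f g -> agr N g f.
Proof. by move=> h m hm; rewrite h. Qed.

Lemma agr_trans n N (f g h : PS R n) : agr N f g -> agr N g h -> agr N f h.
Proof. by move=> h1 h2 m hm; rewrite h1 // h2. Qed.

Lemma mcoeff_trunc n d (f : PS R n) m :
  (trunc d f)@_m = if (mdeg m <= d)%N then f m else 0.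
Proof.
rewrite /trunc raddf_sum /=.
under eq_bigr => mm _ do rewrite mcoeffZ mcoeffX.
case: ifP => h.
  have h' : (mdeg m < d.+1)%N by [].
  rewrite (bigD1 (BMultinom h')) //= eqxx mulr1 big1 ?addr0 // => mm hmm.
  case: eqP; last by rewrite mulr0.
  by move=> e; move: hmm; rewrite -(inj_eq val_inj) /= e eqxx.
rewrite big1 // => mm _; case: eqP; last by rewrite mulr0.
by move=> e; move: (bmdeg mm); rewrite e ltnS h.
Qed.

Lemma trunc_ext n d (f g : PS R n) : agr d.+1 f g -> trunc d f = trunc d g.
Proof. by move=> h; apply: eq_bigr => mm _; rewrite h // bmdeg. Qed.

Lemma agr_add n N (f f' g g' : PS R n) :
  agr N f f' -> agr N g g' -> agr N (ps_add f g) (ps_add f' g').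
Proof. by move=> h1 h2 m hm; rewrite /ps_add h1 // h2. Qed.

Lemma agr_mul n N (f f' g g' : PS R n) :
  agr N f f' -> agr N g g' -> agr N (ps_mul f g) (ps_mul f' g').
Proof.
move=> h1 h2 m hm; rewrite /ps_mul (@trunc_ext _ _ f f') ?(@trunc_ext _ _ g g') //.
  by apply: agr_le h2.
by apply: agr_le h1.
Qed.

Lemma agr_opp n N (f f' : PS R n) : agr N f f' -> agr N (gm_opp f) (gm_opp f').
Proof.
move=> h1 m hm; rewrite /gm_opp (@trunc_ext _ _ f f') //; exact: agr_le h1.
Qed.

Lemma agr_subst n k N (lq : n.-tuple {mpoly R[k]}) (f f' : PS R n) :
  agr N f f' -> agr N (ps_subst lq f) (ps_subst lq f').
Proof.
move=> h1 m hm; rewrite /ps_subst (@trunc_ext _ _ f f') //; exact: agr_le h1.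
Qed.

Lemma agr_gadd n N (f f' g g' : PS R n) :
  agr N f f' -> agr N g g' -> agr N (gm_add f g) (gm_add f' g').
Proof. by move=> h1 h2; rewrite /gm_add; apply: agr_add; [apply: agr_add|apply: agr_mul]. Qed.

Lemma agr_gsub n N (f f' g g' : PS R n) :
  agr N f f' -> agr N g g' -> agr N (gm_sub f g) (gm_sub f' g').
Proof. by move=> h1 h2; rewrite /gm_sub; apply: agr_gadd => //; apply: agr_opp. Qed.

Lemma agr_refl n N (f : PS R n) : agr N f f.
Proof. by []. Qed.

Lemma agr_delta n N (f f' : PS R n) : agr N f f' -> agr N (delta f) (delta f').
Proof.
move=> h; rewrite /delta.
have : agr N (@ps_zero R n.+1) (@ps_zero R n.+1) by [].
generalize (@ps_zero R n.+1) at 1 3 => a1; generalize (@ps_zero R n.+1) => a2.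
elim: (iota 0 n.+2) a1 a2 => [|k s ih] a1 a2 ha; first exact: ha.
apply: ih.
by case: (odd k); [apply: agr_gsub|apply: agr_gadd]; try exact: ha; apply: agr_subst; exact: h.
Qed.

Lemma Pin_trunc n d (P : {mpoly R[n]}) : Pin d.+1 (trunc d (ps_of P) - P).
Proof. by move=> m hm; rewrite mcoeffB mcoeff_trunc -ltnS hm subrr. Qed.

Lemma ps_of_add n (P Q : {mpoly R[n]}) : ps_add (ps_of P) (ps_of Q) = ps_of (P + Q).
Proof. by apply: functional_extensionality => m; rewrite /ps_add /ps_of mcoeffD. Qed.

Lemma ps_of_mul n (P Q : {mpoly R[n]}) : ps_mul (ps_of P) (ps_of Q) = ps_of (P * Q).
Proof.
apply: functional_extensionality => m; rewrite /ps_mul /ps_of.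
set d := mdeg m.
have hP := Pin_trunc (d:=d) P; have hQ := Pin_trunc (d:=d) Q.
move: hP hQ; set TP := trunc d _; set TQ := trunc d _ => hP hQ.
have -> : TP * TQ = P * Q + ((TP - P) * TQ + P * (TQ - Q)) by ring.
rewrite mcoeffD mcoeffD (PinM hP (Pin_any TQ)) ?addn0 //.
by rewrite (PinM (Pin_any P) hQ) // !addr0.
Qed.

Lemma ps_of_subst n k (lq : n.-tuple {mpoly R[k]}) (P : {mpoly R[n]}) :
  (forall i, Pin 1 (tnth lq i)) -> ps_subst lq (ps_of P) = ps_of (P \mPo lq).
Proof.
move=> hl; apply: functional_extensionality => m; rewrite /ps_subst /ps_of.
have hP := Pin_trunc (d:=mdeg m) P.
move: hP; set TP := trunc _ _ => hP.
have -> : TP = P + (TP - P) by ring.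
by rewrite raddfD /= mcoeffD (Pin_comp hl hP) ?addr0.
Qed.

Lemma PinXB n N k (A B : {mpoly R[n]}) : Pin N (A - B) -> Pin N (A ^+ k - B ^+ k).
Proof.
move=> h; elim: k => [|k ih]; first by rewrite !expr0 subrr; apply: Pin0.
have -> : A ^+ k.+1 - B ^+ k.+1 = (A - B) * A ^+ k + B * (A ^+ k - B ^+ k)
  by rewrite !exprS; ring.
apply: PinD.
  by rewrite -[N]addn0; apply: PinM.
by rewrite -[N]add0n; apply: PinM.
Qed.

Lemma gm_opp_of n q (P : {mpoly R[n]}) : (0 < q)%N -> Pin q P ->
  agr (3 * q) (gm_opp (ps_of P)) (ps_of (- P + P ^+ 2)).
Proof.
move=> q0 hP m hm; rewrite /gm_opp /ps_of raddf_sum /=.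
set d := mdeg m.
have hT := Pin_trunc (d:=d) P.
move: hT; set TP := trunc _ _ => hT.
have e : forall k, ((- TP) ^+ k)@_m = ((- P) ^+ k)@_m.
  move=> k; apply/eqP; rewrite -subr_eq0 -mcoeffB; apply/eqP.
  have h1 : Pin d.+1 (- TP - - P).
    have -> : - TP - - P = - (TP - P) by ring.
    by apply: PinN.
  by apply: (PinXB k h1).
under eq_bigr => k _ do rewrite e.
have z : forall k, (0 < k)%N -> (d < k * q)%N -> ((- P) ^+ k)@_m = 0.
  by move=> k _ hk; apply: PinX (PinN hP) _ hk.
have ext : \sum_(1 <= k < d.+1) ((- P) ^+ k)@_m = \sum_(1 <= k < d.+3) ((- P) ^+ k)@_m.
  rewrite [RHS](big_cat_nat (n:=d.+1)) //; last by rewrite ltnS ltnW.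
  rewrite [X in _ = _ + X]big1_seq ?addr0 // => k; move=> /andP [_]; rewrite mem_index_iota => /andP [hk _]. 
  apply: z; first by lia.
  by apply: leq_trans hk _; rewrite leq_pmulr.
rewrite ext (big_cat_nat (n:=3)) //.
rewrite [X in _ + X = _]big1_seq ?addr0; last first.
  move=> k; move=> /andP [_]; rewrite mem_index_iota => /andP [hk _]; apply: z; first by lia.
  by apply: leq_trans hm _; rewrite leq_mul2r hk orbT.
by rewrite big_ltn // big_nat1 expr1 mcoeffD sqrrN.
Qed.

Lemma ps_zero_of n : @ps_zero R n = ps_of 0.
Proof. by apply: functional_extensionality => m; rewrite /ps_of mcoeff0. Qed.

Lemma gm_add_of n (U V : {mpoly R[n]}) :
  gm_add (ps_of U) (ps_of V) = ps_of (U + V + U * V).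
Proof. by rewrite /gm_add ps_of_mul !ps_of_add. Qed.

Lemma agr_of n N (U W : {mpoly R[n]}) : Pin N (U - W) -> agr N (ps_of U) (ps_of W).
Proof. by move=> h m hm; apply/eqP; rewrite /ps_of -subr_eq0 -mcoeffB h. Qed.

Lemma step_add n N (f g : PS R n) U V W :
  agr N f (ps_of U) -> agr N g (ps_of V) -> Pin N (U + V + U * V - W) ->
  agr N (gm_add f g) (ps_of W).
Proof.
move=> h1 h2 h3; apply: agr_trans (agr_gadd h1 h2) _.
by rewrite gm_add_of; apply: agr_of.
Qed.

Lemma step_sub n N q (f : PS R n) U V W :
  agr N f (ps_of U) -> Pin q V -> (0 < q)%N -> (N <= 3 * q)%N ->
  Pin N (U + (- V + V ^+ 2) + U * (- V + V ^+ 2) - W) ->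
  agr N (gm_sub f (ps_of V)) (ps_of W).
Proof.
move=> h1 hV q0 hN h3; rewrite /gm_sub; apply: step_add h1 _ h3.
exact: agr_le hN (gm_opp_of q0 hV).
Qed.

Lemma Pin_face n k i : Pin 1 (tnth (face R n k) i).
Proof.
rewrite tnth_mktuple /face_var.
by case: ifP => _; [|case: ifP => _; [apply: PinD|]]; apply: PinXU.
Qed.

Lemma trunc_of0 n d : trunc d (ps_of (0 : {mpoly R[n]})) = 0.
Proof. by rewrite /trunc big1 // => mm _; rewrite /ps_of mcoeff0 scale0r. Qed.

Lemma gm_opp_of0 n : gm_opp (ps_of (0 : {mpoly R[n]})) = ps_of 0.
Proof.
apply: functional_extensionality => m; rewrite /gm_opp trunc_of0 /ps_of mcoeff0.
rewrite big_nat big1 ?mcoeff0 // => k /andP [hk _].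
by rewrite oppr0 expr0n; case: k hk.
Qed.

Lemma delta_zero n : delta (ps_of (0 : {mpoly R[n]})) = ps_of 0.
Proof.
have hs : forall k, ps_subst (face R n k) (ps_of (0 : {mpoly R[n]})) = ps_of 0.
  by move=> k; rewrite ps_of_subst ?comp_mpoly0 //; apply: Pin_face.
rewrite /delta.
have : @ps_zero R n.+1 = ps_of 0 by exact: ps_zero_of.
generalize (@ps_zero R n.+1) => a.
elim: (iota 0 n.+2) a => [|k s ih] a ha; first exact: ha.
apply: ih; rewrite ha hs.
by rewrite /gm_sub ?gm_opp_of0; case: (odd k); rewrite gm_add_of mul0r !addr0.
Qed.


Lemma PinM' n N a b (P Q : {mpoly R[n]}) : (N <= a + b)%N -> Pin a P -> Pin b Q -> Pin N (P * Q).
Proof. by move=> h hP hQ; apply: Pin_le h (PinM hP hQ). Qed.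

Lemma start_of n (A : {mpoly R[n]}) N : agr N (gm_add (@ps_zero R n) (ps_of A)) (ps_of A).
Proof. by rewrite ps_zero_of gm_add_of mul0r add0r addr0. Qed.

Lemma chain2 (A B C D : {mpoly R[3]}) p : (0 < p)%N ->
  Pin p A -> Pin p B -> Pin p C -> Pin p D ->
  agr (3 * p) (gm_sub (gm_add (gm_sub (gm_add (@ps_zero R 3) (ps_of A)) (ps_of B)) (ps_of C)) (ps_of D))
    (ps_of (A - B + C - D + B ^+ 2 - A * B + A * C - B * C + D ^+ 2 - (A - B + C) * D)).
Proof.
move=> p0 hA hB hC hD.
have h1 := @start_of _ A (3 * p).
have h2 : agr (3 * p) (gm_sub (gm_add (@ps_zero R 3) (ps_of A)) (ps_of B)) (ps_of (A - B + B ^+ 2 - A * B)).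
  apply: (step_sub h1 hB p0) => //.
  have -> : A + (- B + B ^+ 2) + A * (- B + B ^+ 2) - (A - B + B ^+ 2 - A * B) = A * (B * B) by ring.
  by apply: (PinM' (a:=p) (b:=p+p)) => //; [lia| apply: PinM].
have h3 : agr (3 * p) (gm_add (gm_sub (gm_add (@ps_zero R 3) (ps_of A)) (ps_of B)) (ps_of C))
    (ps_of (A - B + C + B ^+ 2 - A * B + A * C - B * C)).
  apply: (step_add h2 (@agr_refl _ _ _)).
  have -> : A - B + B ^+ 2 - A * B + C + (A - B + B ^+ 2 - A * B) * C - (A - B + C + B ^+ 2 - A * B + A * C - B * C)
     = (B * B - A * B) * C by ring.
  apply: (PinM' (a:=p+p) (b:=p)) => //; first lia.
  by apply: PinB; apply: PinM.
apply: (step_sub h3 hD p0) => //.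
have -> : (A - B + C + B ^+ 2 - A * B + A * C - B * C) + (- D + D ^+ 2) + (A - B + C + B ^+ 2 - A * B + A * C - B * C) * (- D + D ^+ 2) -
   (A - B + C - D + B ^+ 2 - A * B + A * C - B * C + D ^+ 2 - (A - B + C) * D)
   = (B * B - A * B + A * C - B * C) * (- D + D * D) + (A - B + C) * (D * D) by ring.
have hDD : Pin (p + p) (D * D) by apply: PinM.
apply: PinD.
  apply: (PinM' (a:=p+p) (b:=p)) => //; first lia.
    by apply: PinB; [apply: PinD; [apply: PinB|]|]; apply: PinM.
  by apply: PinD; [apply: PinN | apply: Pin_le hDD; lia].
apply: (PinM' (a:=p) (b:=p+p)) => //; first lia.
by apply: PinD; [apply: PinB|].
Qed.

Lemma chain3 (G0 G1 G2 G3 G4 : {mpoly R[4]}) p : (0 < p)%N ->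
  Pin (2 * p) G0 -> Pin (2 * p) G1 -> Pin (2 * p) G2 -> Pin (2 * p) G3 -> Pin (2 * p) G4 ->
  agr (3 * p) (gm_add (gm_sub (gm_add (gm_sub (gm_add (@ps_zero R 4) (ps_of G0)) (ps_of G1))
        (ps_of G2)) (ps_of G3)) (ps_of G4))
    (ps_of (G0 - G1 + G2 - G3 + G4)).
Proof.
move=> p0 h0 h1 h2 h3 h4.
have q0 : (0 < 2 * p)%N by lia.
have hle : (3 * p <= 3 * (2 * p))%N by lia.
have PM : forall P Q : {mpoly R[4]}, Pin (2 * p) P -> Pin (2 * p) Q -> Pin (3 * p) (P * Q).
  by move=> P Q hP hQ; apply: (PinM' (a:=2*p) (b:=2*p)) => //; lia.
have hsq : forall Q : {mpoly R[4]}, Pin (2 * p) Q -> Pin (2 * p) (- Q + Q ^+ 2).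
  move=> Q hQ; apply: PinD; first exact: PinN.
  by apply: Pin_le (PinX (k:=2) hQ); lia.
have s1 := @start_of _ G0 (3 * p).
have s2 : agr (3 * p) (gm_sub (gm_add (@ps_zero R 4) (ps_of G0)) (ps_of G1)) (ps_of (G0 - G1)).
  apply: (step_sub s1 h1 q0 hle).
  have -> : G0 + (- G1 + G1 ^+ 2) + G0 * (- G1 + G1 ^+ 2) - (G0 - G1) = G1 * G1 + G0 * (- G1 + G1 ^+ 2) by ring.
  by apply: PinD; apply: PM => //; apply: hsq.
have s3 : agr (3 * p) (gm_add (gm_sub (gm_add (@ps_zero R 4) (ps_of G0)) (ps_of G1)) (ps_of G2)) (ps_of (G0 - G1 + G2)).
  apply: (step_add s2 (@agr_refl _ _ _)).
  have -> : G0 - G1 + G2 + (G0 - G1) * G2 - (G0 - G1 + G2) = (G0 - G1) * G2 by ring.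
  by apply: PM => //; apply: PinB.
have s4 : agr (3 * p) (gm_sub (gm_add (gm_sub (gm_add (@ps_zero R 4) (ps_of G0)) (ps_of G1)) (ps_of G2)) (ps_of G3))
    (ps_of (G0 - G1 + G2 - G3)).
  apply: (step_sub s3 h3 q0 hle).
  have -> : G0 - G1 + G2 + (- G3 + G3 ^+ 2) + (G0 - G1 + G2) * (- G3 + G3 ^+ 2) - (G0 - G1 + G2 - G3)
     = G3 * G3 + (G0 - G1 + G2) * (- G3 + G3 ^+ 2) by ring.
  by apply: PinD; apply: PM => //; [apply: PinD; [apply: PinB|] | apply: hsq].
apply: (step_add s4 (@agr_refl _ _ _)).
have -> : G0 - G1 + G2 - G3 + G4 + (G0 - G1 + G2 - G3) * G4 - (G0 - G1 + G2 - G3 + G4)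
   = (G0 - G1 + G2 - G3) * G4 by ring.
by apply: PM => //; apply: PinB => //; apply: PinD => //; apply: PinB.
Qed.

Lemma cancel_sub n N q (f : PS R n) Y : (0 < q)%N -> (N <= 2 * q)%N ->
  Pin q Y -> agr N f (ps_of Y) -> agr N (gm_sub f (ps_of Y)) (ps_of 0).
Proof.
move=> q0 hN hY hf; apply: (step_sub hf hY q0); first lia.
have -> : Y + (- Y + Y ^+ 2) + Y * (- Y + Y ^+ 2) - 0 = Y * Y + Y * (- Y + Y * Y) by ring.
have hYY : Pin (q + q) (Y * Y) by apply: PinM.
apply: PinD; first by apply: Pin_le hYY; lia.
apply: (PinM' (a:=q) (b:=q)) => //; first lia.
by apply: PinD; [apply: PinN|apply: Pin_le hYY; lia].
Qed.

End Gen.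

Lemma idx (R : comNzRingType) n (c : R) (u0 u1 v1 v2 : {mpoly R[n]}) :
  c *: (u1 * v2) - c *: ((u0 + u1) * v2) + c *: (u0 * (v1 + v2)) -
  c *: (u0 * v1) + (c *: ((u0 + u1) * v2)) ^+ 2 -
  c *: (u1 * v2) * (c *: ((u0 + u1) * v2)) +
  c *: (u1 * v2) * (c *: (u0 * (v1 + v2))) -
  c *: ((u0 + u1) * v2) * (c *: (u0 * (v1 + v2))) + 
  (c *: (u0 * v1)) ^+ 2 -
  (c *: (u1 * v2) - c *: ((u0 + u1) * v2) + c *: (u0 * (v1 + v2))) *
  (c *: (u0 * v1)) - c ^+ 2 *: (u0 * u1 * v2 ^+ 2 - u0 ^+ 2 * v1 * v2) = 0.
Proof.
rewrite -!mul_mpolyC rmorphXn /=.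
ring.
Qed.

Lemma idy (R : comNzRingType) n (c : R) (a0 a1 a2 b0 b1 d1 d2 d3 e2 e3 : {mpoly R[n]}) :
  c *: (a1 * a2 * e3 - b1 * d2 * d3) - c *: ((a0 + a1) * a2 * e3 - (b0 + b1) * d2 * d3)
  + c *: (a0 * (a1 + a2) * e3 - b0 * (d1 + d2) * d3)
  - c *: (a0 * a1 * (e2 + e3) - b0 * d1 * (d2 + d3)) + c *: (a0 * a1 * e2 - b0 * d1 * d2) = 0.
Proof. rewrite -!mul_mpolyC; ring. Qed.

Lemma tnth_face (R : comNzRingType) n k i : (i < n.+1)%N ->
  tnth (face R n.+1 k) (inord i) =
  if (i.+1 < k)%N then 'X_(inord i) else if i.+1 == k then 'X_(inord i) + 'X_(inord i.+1)
  else 'X_(inord i.+1).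
Proof. by move=> hi; rewrite tnth_mktuple /face_var inordK. Qed.

Lemma PinXe (R : comNzRingType) n (k : 'I_n) e : Pin e ('X_k ^+ e : {mpoly R[n]}).
Proof. by rewrite -[X in Pin X _]muln1; apply: PinX; apply: PinXU. Qed.

Section F2.
Local Notation F := 'F_2.

Lemma F2_cases (c : F) : c = 0 \/ c = 1.
Proof. by case: c => [[|[|k]] hk]; [left|right|]; try apply: val_inj. Qed.

Lemma two0 : (2%:R : F) = 0. Proof. by apply/eqP. Qed.

Lemma frob k (P Q : {mpoly F[k]}) i : (P + Q) ^+ (2 ^ i) = P ^+ (2 ^ i) + Q ^+ (2 ^ i).
Proof.
elim: i P Q => [|i ih] P Q; first by rewrite !expr1.
rewrite expnS !exprM sqrrD -scaler_nat two0 scale0r addr0 ih.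
by [].
Qed.

Lemma comp2 k (lq : 2.-tuple {mpoly F[k]}) (c : F) a b :
  (c *: ('X_(inord 0) ^+ a * 'X_(inord 1) ^+ b)) \mPo lq =
  c *: (tnth lq (inord 0) ^+ a * tnth lq (inord 1) ^+ b).
Proof. by rewrite comp_mpolyZ rmorphM !rmorphXn /= !comp_mpolyXU -!tnth_nth. Qed.

Lemma comp3 k (lq : 3.-tuple {mpoly F[k]}) (c : F) a b d a' b' d' :
  (c *: ('X_(inord 0) ^+ a * 'X_(inord 1) ^+ b * 'X_(inord 2) ^+ d
      - 'X_(inord 0) ^+ a' * 'X_(inord 1) ^+ b' * 'X_(inord 2) ^+ d')) \mPo lq =
  c *: (tnth lq (inord 0) ^+ a * tnth lq (inord 1) ^+ b * tnth lq (inord 2) ^+ d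
      - tnth lq (inord 0) ^+ a' * tnth lq (inord 1) ^+ b' * tnth lq (inord 2) ^+ d').
Proof. by rewrite comp_mpolyZ raddfB /= !rmorphM !rmorphXn /= !comp_mpolyXU -!tnth_nth. Qed.

Lemma delta2E (f : PS F 2) : delta f =
  gm_sub (gm_add (gm_sub (gm_add (@ps_zero F 3) (ps_subst (face F 2 0) f))
    (ps_subst (face F 2 1) f)) (ps_subst (face F 2 2) f)) (ps_subst (face F 2 3) f).
Proof. by []. Qed.

Lemma delta3E (f : PS F 3) : delta f =
  gm_add (gm_sub (gm_add (gm_sub (gm_add (@ps_zero F 4) (ps_subst (face F 3 0) f))
    (ps_subst (face F 3 1) f)) (ps_subst (face F 3 2) f)) (ps_subst (face F 3 3) f))
    (ps_subst (face F 3 4) f).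
Proof. by []. Qed.


End F2.

Unset Implicit Arguments.
Set Strict Implicit.

Theorem mainTheorem5 (i j : nat) (c : 'F_2) : i <> j ->
  let p := (2 ^ i + 2 ^ j)%N in
  let r := p in
  exists x : PS 'F_2 2,
    Zr r p x /\
    agree_upto p x
      (ps_of (c *: ('X_(inord 0) ^+ (2 ^ i) * 'X_(inord 1) ^+ (2 ^ j)))) /\
    exists y : PS 'F_2 3,
      Zr r (p + r) y /\
      agree_upto (p + r) y
        (ps_of (c ^+ 2 *:
           ('X_(inord 0) ^+ (2 ^ i) * 'X_(inord 1) ^+ (2 ^ i)
              * 'X_(inord 2) ^+ (2 ^ j.+1)
            - 'X_(inord 0) ^+ (2 ^ i.+1) * 'X_(inord 1) ^+ (2 ^ j)
              * 'X_(inord 2) ^+ (2 ^ j)))) /\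
      Eeq r (p + r) (delta x) y.
Proof.
move=> _ p r.
set P2 := c *: _.
set Y3 := c ^+ 2 *: _.
have p0 : (0 < p)%N by rewrite /p; have := expn_gt0 2 i; lia.
have hP2 : Pin p P2 by rewrite /P2; apply: PinZ; apply: PinM; apply: PinXe.
have hY3 : Pin (2 * p) Y3.
  rewrite /Y3; apply: PinZ; apply: PinB.
    apply: (@Pin_le _ _ (2 ^ i + 2 ^ i + 2 ^ j.+1)); first by rewrite /p expnS; lia.
    by apply: PinM; [apply: PinM|]; apply: PinXe.
  apply: (@Pin_le _ _ (2 ^ i.+1 + 2 ^ j + 2 ^ j)); first by rewrite /p expnS; lia.
  by apply: PinM; [apply: PinM|]; apply: PinXe.
have hdx : agr (3 * p) (delta (ps_of P2)) (ps_of Y3).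
  rewrite delta2E !ps_of_subst; try exact: Pin_face.
  apply: agr_trans (chain2 p0 _ _ _ _) _; try (apply: Pin_comp => //; exact: Pin_face).
  apply: agr_of.
  rewrite /P2 /Y3 !comp2 !tnth_face //=.
  match goal with |- Pin _ ?E => have -> : E = 0 end; last exact: Pin0.
  rewrite !frob !expnSr !(exprM _ (2 ^ i) 2) !(exprM _ (2 ^ j) 2).
  set u0 := 'X_(inord 0) ^+ (2 ^ i); set u1 := 'X_(inord 1) ^+ (2 ^ i).
  set v1 := 'X_(inord 1) ^+ (2 ^ j); set v2 := 'X_(inord 2) ^+ (2 ^ j).
  exact: idx.
have hdy : agr (3 * p) (delta (ps_of Y3)) (ps_of 0).
  rewrite delta3E !ps_of_subst; try exact: Pin_face.
  apply: agr_trans (chain3 p0 _ _ _ _ _) _; try (apply: Pin_comp => //; exact: Pin_face).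
  apply: agr_of; rewrite subr0.
  match goal with |- Pin _ ?E => have -> : E = 0 end; last exact: Pin0.
  rewrite /Y3 !comp3 !tnth_face //= !frob.
  exact: idy.
exists (ps_of P2); split.
  split; [|split].
  - by apply: hP2; rewrite mdeg0.
  - exact: hP2.
  - by move=> m hm; rewrite hdx; [apply: hY3; rewrite /r; lia | lia].
  split; first by [].
exists (ps_of Y3); split.
  split; [|split].
  - by apply: hY3; rewrite mdeg0; lia.
  - by move=> m hm; apply: hY3; rewrite /r in hm; lia.
  - move=> m hm; rewrite hdy; first by rewrite /ps_of mcoeff0.
    by rewrite /r in hm; lia.
split; first by [].
have q0 : (0 < 2 * p)%N by lia.
have hN : (3 * p <= 2 * (2 * p))%N by lia.
have ha := cancel_sub q0 hN hY3 hdx.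
exists (gm_sub (delta (ps_of P2)) (ps_of Y3)), (ps_of (0 : {mpoly 'F_2[2]})).
split; [|split].
- split; [|split].
  + by rewrite /cochain ha /ps_of ?mcoeff0 // mdeg0; lia.
  + by move=> m hm; rewrite ha /ps_of ?mcoeff0 //; rewrite /r in hm; lia.
  + move=> m hm; rewrite (agr_delta ha) ?delta_zero /ps_of ?mcoeff0 //.
    by rewrite /r in hm; lia.
- split; first by rewrite /cochain /ps_of mcoeff0.
  split; first by move=> m _; rewrite /ps_of mcoeff0.
  by move=> m _; rewrite delta_zero /ps_of mcoeff0.
- move=> m; rewrite delta_zero /gm_add /ps_add /ps_mul trunc_of0 mulr0 /ps_of !mcoeff0 !addr0.
  by [].
Qed.
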